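(* Fix $\alpha>0$. For $K\ge 1$ define $\mathcal{D}:[0,1]\times[-1,1]^K\to\mathbb{R}^K$ by \[ \mathcal{D}(t,c_{1},\dots,c_{K}):=\left(e^{-4\pi^{2}\alpha t}c_{1},\,e^{-4\pi^{2}\cdot 2^{2}\alpha t}c_{2},\,\dots,\,e^{-4\pi^{2}K^{2}\alpha t}c_{K}\right). \] Then for any $0<\epsilon<1$ and $K\ge1$ there exists an MLP network $\tilde{\mathcal{D}}:\mathbb{R}^{K+1}\to\mathbb{R}^K$, consisting of dense layers and $\tanh$ as activation function, with $O(K^{3}+K\log^{2}(\epsilon^{-1}))$ weights, such that \[ \|\tilde{\mathcal{D}}(t,c_{1},\dots,c_{K})-\mathcal{D}(t,c_{1},\dots,c_{K})\|_{\infty}\leq\epsilon \] for all inputs $c_{1},\dots,c_{K}\in[-1,1]$ and $t\in[0,1]$.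
   Context: An MLP (multilayer perceptron) network is a feed-forward composition of layers, each of the form $v_j=\sigma\circ(M_j v_{j-1}+b_j)$ with a matrix $M_j$ and bias vector $b_j$ and coordinate-wise nonlinearity $\sigma$ (here $\sigma=\tanh$); in some layers the bias and/or the nonlinearity may be omitted. The ''number of weights'' is the total number of parameters (entries of all $M_j$ and $b_j$). The operator $\mathcal{D}$ is the exact spectral time-stepping map for the heat equation $u_t=\alpha u_{xx}$ on $[0,1]$ in the basis $\{\sin(2\pi kx)\}_k$. *)

(* Defs.v *)
From HB Require Import structures.
From mathcomp Require Import all_boot all_order all_algebra.
From mathcomp Require Import all_classical all_reals all_analysis.
Set Implicit Arguments. Unset Strict Implicit. Unset Printing Implicit Defensive.
Import Order.TTheory GRing.Theory Num.Theory.
Local Open Scope ring_scope.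

Definition tanh {R : realType} (x : R) : R :=
  (expR x - expR (- x)) / (expR x + expR (- x)).

(* A dense layer R^n -> R^m : v |-> sigma (M v + b), where the bias b and the
   nonlinearity sigma = tanh (coordinate-wise) may each be omitted. *)
Record layer (R : realType) (n m : nat) := Layer {
  lay_mat : 'M[R]_(m, n);
  lay_bias : option 'cV[R]_m;
  lay_act : bool }.

Definition eval_layer (R : realType) n m (L : layer R n m) (v : 'cV[R]_n)
  : 'cV[R]_m :=
  let w := lay_mat L *m v + (if lay_bias L is Some b then b else 0) in
  if lay_act L then map_mx (@tanh R) w else w.

Definition layer_weights (R : realType) n m (L : layer R n m) : nat :=
  (m * n + (if lay_bias L is Some _ then m else 0))%N.

Inductive mlp (R : realType) : nat -> nat -> Type :=
| mlp_nil n : mlp R n n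
| mlp_cons n m p : layer R n m -> mlp R m p -> mlp R n p.

Fixpoint eval_mlp (R : realType) n p (N : mlp R n p) : 'cV[R]_n -> 'cV[R]_p :=
  match N in mlp _ n p return 'cV[R]_n -> 'cV[R]_p with
  | mlp_nil _ => fun v => v
  | mlp_cons _ _ _ L N' => fun v => eval_mlp N' (eval_layer L v)
  end.

Fixpoint mlp_weights (R : realType) n p (N : mlp R n p) : nat :=
  match N with
  | mlp_nil _ => 0%N
  | mlp_cons _ _ _ L N' => (layer_weights L + mlp_weights N')%N
  end.

(* the exact spectral heat-equation time stepper, component k (0-based index
   i corresponds to k = i+1): exp(-4 pi^2 k^2 alpha t) c_k *)
Definition heatD (R : realType) (alpha : R) (K : nat) (t : R) (c : 'cV[R]_K)
  : 'cV[R]_K :=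
  \col_(i < K) (expR (- (4 * pi ^+ 2 * (i.+1)%:R ^+ 2 * alpha * t)) * c i 0).

(* Main.v *)
Require Import Defs.
From HB Require Import structures.
From mathcomp Require Import all_boot all_order all_algebra.
From mathcomp Require Import all_classical all_reals all_analysis.
From mathcomp Require Import ring lra zify.
Import Order.TTheory GRing.Theory Num.Theory.
Local Open Scope ring_scope.

Lemma half_bound {R : realType} (y : R) : -(1/2) <= y <= 1/2 ->
  expR y - expR (- y) - 2 * y <= 2 * y ^+ 2.
Proof.
move=> /andP[y1 y2].
have hq := expR_ge1Dx (- y).
have pq : expR y * expR (- y) = 1 by rewrite -expRD subrr expR0.
have hp0 := expR_gt0 y.
have hp : expR y * (1 - y) <= 1.
  rewrite -pq; apply: ler_wpM2l; [exact: ltW| lra].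
have : expR y <= 1 + y + 2 * y ^+ 2 by nra.
lra.
Qed.

Lemma sinh_bound {R : realType} (y : R) : -(1/2) <= y <= 1/2 ->
  `| expR y - expR (- y) - 2 * y | <= 2 * y ^+ 2.
Proof.
move=> hy; rewrite ler_norml; apply/andP; split; last exact: half_bound.
have hy' : -(1/2) <= - y <= 1/2 by move: hy => /andP[? ?]; apply/andP; split; lra.
have := half_bound (- y) hy'; rewrite opprK sqrrN; lra.
Qed.

Lemma core {R : realType} (e D c : R) : 0 < e < 1 -> -1 <= c <= 1 -> 0 < D <= 1 ->
  `| (20 / e) / (4 * (e / 2)) *
      ((D * expR (e / 2 * c) - 20 / e) / (D * expR (e / 2 * c) + 20 / e)
     - (D * expR (- (e / 2 * c)) - 20 / e) / (D * expR (- (e / 2 * c)) + 20 / e))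
    - D * c | <= e.
Proof.
move=> /andP[e0 e1] /andP[c0 c1] /andP[D0 D1].
set h := e / 2; set M := 20 / e; set y := h * c.
set p := expR y; set q := expR (- y).
have h0 : 0 < h by rewrite /h; lra.
have Me : M * e = 20 by rewrite /M mulfVK ?gt_eqF.
have M0 : 0 < M by rewrite /M divr_gt0.
have M1 : 1 <= M by nra.
have yb : -(1/2) <= y <= 1/2.
  rewrite /y /h; apply/andP; split; nra.
have pq : p * q = 1 by rewrite /p /q -expRD subrr expR0.
have p0 : 0 < p := expR_gt0 _.
have q0 : 0 < q := expR_gt0 _.
have hp := expR_ge1Dx y; have hq := expR_ge1Dx (- y).
rewrite -/p in hp; rewrite -/q in hq.
move: yb => /andP[yb1 yb2].
have p2 : p <= 2 by nra.
have q2 : q <= 2 by nra.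
set a := D * p; set b := D * q.
have a0 : 0 < a by rewrite /a mulr_gt0.
have b0 : 0 < b by rewrite /a mulr_gt0.
have a2 : a <= 2 by rewrite /a; nra.
have b2 : b <= 2 by rewrite /b; nra.
have ab1 : a * b <= 1 by rewrite /a /b; nra.
set S := (a - b) / (2 * h).
set r := M ^+ 2 / ((a + M) * (b + M)).
have den0 : 0 < (a + M) * (b + M) by apply: mulr_gt0; lra.
have -> : M / (4 * h) * ((a - M) / (a + M) - (b - M) / (b + M)) = S * r.
  rewrite /S /r; field; apply/and3P; split; apply: lt0r_neq0 => //; lra.
have rden : r * ((a + M) * (b + M)) = M ^+ 2 by rewrite /r mulfVK ?gt_eqF.
have r0 : 0 < r by rewrite /r divr_gt0 // exprn_gt0.
have denb : (a + M) * (b + M) <= M ^+ 2 + 5 * M by nra.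
have r1' : r <= 1.
  have : r * ((a + M) * (b + M)) <= 1 * ((a + M) * (b + M)) by rewrite rden mul1r; nra.
  by rewrite ler_pM2r.
have r1 : 1 - r <= 5 / M.
  rewrite ler_pdivlMr //.
  have : r * ((a + M) * (b + M)) <= r * (M ^+ 2 + 5 * M) by rewrite ler_pM2l.
  rewrite rden => hh.
  have : M * (M - r * M - 5 * r) <= 0 by nra.
  rewrite pmulr_rle0 // => hh2. nra.
have SD : `|S - D * c| <= h.
  have -> : S - D * c = D * (p - q - 2 * y) / (2 * h).
    rewrite /S /a /b /y; field; lra.
  have h2 : 0 < 2 * h by lra.
  rewrite normrM normfV normrM (gtr0_norm D0) (gtr0_norm h2).
  rewrite ler_pdivrMr //.
  have := sinh_bound y (introT andP (conj yb1 yb2)).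
  rewrite -/p -/q => hs.
  have hc2 : c ^+ 2 <= 1 by nra.
  have hy2 : 2 * y ^+ 2 <= 2 * h ^+ 2.
    rewrite /y exprMn; have : 0 <= h ^+ 2 by apply: sqr_ge0. nra.
  nra.
have Sb : `|S| <= 2.
  have : `|D * c| <= 1.
    rewrite normrM (gtr0_norm D0); have : `|c| <= 1 by rewrite ler_norml; lra.
    have : 0 <= `|c| by []. nra.
  have : `|S| <= `|S - D * c| + `|D * c| by rewrite -{1}(subrK (D * c) S) ler_normD.
  rewrite /h in SD; lra.
have -> : S * r - D * c = (S - D * c) - S * (1 - r) by ring.
apply: le_trans (ler_normB _ _) _.
rewrite normrM (ger0_norm (x := 1 - r)); last lra.
have : 5 / M = e / 4 by rewrite /M; field; lra.
move=> E5; rewrite E5 in r1.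
have : `|S| * (1 - r) <= 2 * (e / 4).
  apply: ler_pM => //; lra.
rewrite /h in SD; lra.
Qed.

Lemma tanh_shift {R : realType} (x M : R) : 0 < M ->
  tanh (x / 2 - ln M / 2) = (expR x - M) / (expR x + M).
Proof.
move=> M0.
set w := x / 2 - ln M / 2.
have E2 : expR w * expR w = expR x / M.
  rewrite -expRD /w (_ : _ + _ = x + - ln M); last by field.
  by rewrite expRD expRN lnK // posrE.
rewrite /tanh expRN.
have E0 : expR w != 0 by rewrite gt_eqF // expR_gt0.
have ->: expR x = expR w * expR w * M by rewrite E2 mulfVK // gt_eqF.
have Ew := expR_gt0 w.
field; apply/and3P; split => //; rewrite gt_eqF //; nra.
Qed.

Definition lamf {R : realType} (alpha : R) {K} (i : 'I_K) : R :=
  4 * pi ^+ 2 * (i.+1)%:R ^+ 2 * alpha.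
Definition kf {R : realType} (e : R) : R := (20 / e) / (4 * (e / 2)).
Definition L1 {R : realType} (alpha e : R) K : layer R (1 + K) (K + K) :=
  Layer (col_mx (row_mx (\col_i (- lamf alpha i / 2)) ((e / 2 / 2)%:M))
                (row_mx (\col_i (- lamf alpha i / 2)) ((- (e / 2 / 2))%:M)))
        (Some (const_mx (- (ln (20 / e) / 2)))) true.
Definition L2 {R : realType} (e : R) K : layer R (K + K) K :=
  Layer (row_mx ((kf e)%:M) ((- kf e)%:M)) None false.
Definition net {R : realType} (alpha e : R) K : mlp R (1 + K) K :=
  mlp_cons (L1 alpha e K) (mlp_cons (L2 e K) (mlp_nil R K)).

Lemma net_eval {R : realType} (alpha e : R) K t (c : 'cV[R]_K) i :
  eval_mlp (net alpha e K) (col_mx (t%:M) c) i 0 =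
  kf e * tanh (t * (- lamf alpha i / 2) + e / 2 / 2 * c i 0 + - (ln (20 / e) / 2))
  - kf e * tanh (t * (- lamf alpha i / 2) + - (e / 2 / 2) * c i 0 + - (ln (20 / e) / 2)).
Proof.
rewrite /= /eval_layer /= addr0.
rewrite mul_col_mx !mul_row_col mul_mx_scalar !mul_scalar_mx.
set X := map_mx _ _.
rewrite -(vsubmxK X) mul_row_col !mul_scalar_mx.
have Xu : X (lshift K i) 0 = tanh (t * (- lamf alpha i / 2) + e / 2 / 2 * c i 0 + - (ln (20 / e) / 2)).
  rewrite /X mxE mxE col_mxEu !mxE //.
have Xd : X (rshift K i) 0 = tanh (t * (- lamf alpha i / 2) + - (e / 2 / 2) * c i 0 + - (ln (20 / e) / 2)).
  rewrite /X mxE mxE col_mxEd !mxE //.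
clearbody X; rewrite !mxE Xu Xd.
by rewrite (mulNr (kf e)).
Qed.

Lemma net_weights {R : realType} (alpha e : R) K :
  mlp_weights (net alpha e K) = (4 * K ^ 2 + 4 * K)%N.
Proof. rewrite /= /layer_weights /=. lia. Qed.

Theorem theorem2 (R : realType) (alpha : R) (halpha : 0 < alpha) :
  exists C : R, 0 < C /\
  forall (eps : R) (K : nat), 0 < eps -> eps < 1 -> (1 <= K)%N ->
  exists N : mlp R (1 + K) K,
    (mlp_weights N)%:R <= C * ((K%:R) ^+ 3 + K%:R * (ln (eps^-1)) ^+ 2) /\
    forall (t : R) (c : 'cV[R]_K),
      0 <= t <= 1 -> (forall i : 'I_K, -1 <= c i 0 <= 1) ->
      forall i : 'I_K,
        `| eval_mlp N (col_mx (t%:M) c) i 0 - heatD alpha t c i 0 | <= eps.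
Proof.
have kE : forall e : R, kf e = (20 / e) / (4 * (e / 2)) by [].
exists 8; split; first lra.
move=> e K e0 e1 K1; exists (net alpha e K); split.
  rewrite net_weights.
  have hn : (4 * K ^ 2 + 4 * K <= 8 * K ^ 3)%N by nia.
  have : (4 * K ^ 2 + 4 * K)%:R <= (8 * K ^ 3)%:R :> R by rewrite ler_nat.
  rewrite natrM natrX => h1.
  have : 0 <= K%:R * ln e^-1 ^+ 2 :> R by rewrite mulr_ge0 // sqr_ge0.
  lra.
move=> t c /andP[t0 t1] hc i.
rewrite net_eval /heatD mxE.
rewrite /lamf; set L := 4 * pi ^+ 2 * _ * alpha.
have L0 : 0 <= L.
  rewrite /L; apply: mulr_ge0; last exact: ltW.
  apply: mulr_ge0; last exact: sqr_ge0.
  apply: mulr_ge0 => //; exact: sqr_ge0.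
have M0 : 0 < 20 / e by rewrite divr_gt0.
rewrite (_ : t * (- L / 2) + e / 2 / 2 * c i 0 + - (ln (20 / e) / 2) =
   (- (L * t) + e / 2 * c i 0) / 2 - ln (20 / e) / 2); last by field.
rewrite (_ : t * (- L / 2) + - (e / 2 / 2) * c i 0 + - (ln (20 / e) / 2) =
   (- (L * t) + - (e / 2 * c i 0)) / 2 - ln (20 / e) / 2); last by field.
rewrite !tanh_shift // !expRD -mulrBr.
apply: core; first by apply/andP.
  exact: hc.
apply/andP; split; first exact: expR_gt0.
rewrite expR_le1 oppr_le0; exact: mulr_ge0.
Qed.
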